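(* Consider online multiclass classification with an arbitrary feedback graph $\mathcal{G}=([K],\mathcal{E})$, and suppose that for every round $t$ the loss $\ell_t=\ell(\cdot,\mathbf{x}_t,y_t)$ is a regular surrogate loss with respect to $\ell$. Run Gappletron on $\mathcal{G}$ (with any $\gamma\ge 0$ and any OCO algorithm $\mathcal{A}$) with a gap map $a:\mathbb{R}^{K\times d}\times\mathbb{R}^d\to[0,1]$ satisfying $a(\mathbf{W}_t,\mathbf{x}_t)=\ell(\mathbf{W}_t,\mathbf{x}_t,y_t^\star)$ for all $t$. Then for every round $t$, $$\sum_{y\in[K]} p_t'(y)\,\mathbb{1}[y\neq y_t]\;\le\;\frac{K-1}{K}\,\ell_t(\mathbf{W}_t)+\gamma_t .$$
   Context: Setting: for $t=1,\dots,T$ an oblivious adversary fixes $\mathbf{x}_t\in\mathbb{R}^d$ and $y_t\in[K]=\{1,\dots,K\}$; the learner sees $\mathbf{x}_t$ and predicts $y_t'\in[K]$. A feedback graph is a directed graph $\mathcal{G}=([K],\mathcal{E})$ in which every node has at least one incoming edge (self-loops allowed); $\mathrm{out}(y')=\{y:(y',y)\in\mathcal{E}\}$. After predicting $y_t'$ the learner observes the pairs $(y,\mathbb{1}[y\ne y_t])$ for $y\in\mathrm{out}(y_t')$ (so $y_t$ is learned iff $y_t\in\mathrm{out}(y_t')$); if a node has $K-1$ outgoing edges the missing edge is added. $\mathcal{Q}=\{y':\mathrm{out}(y')=[K]\}$ is the (possibly empty) set of revealing actions. A dominating set is $S\subseteq[K]$ such that every $y\in[K]$ lies in $\mathrm{out}(y')$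 for some $y'\in S$; $\rho$ is the minimum size of a dominating set and $S$ denotes a minimum dominating set. $\mathbf{1}$ is the all-ones vector, $\mathbf{1}_S$ the indicator vector of $S$, $\mathbf{e}_k$ the $k$-th basis vector of $\mathbb{R}^K$. $P_t,\mathbb{E}_t$ denote probability/expectation conditional on past predictions and feedback. Predictors $\mathbf{W}\in\mathcal{W}\subseteq\mathbb{R}^{K\times d}$ ($\mathcal{W}$ convex) with rows $\mathbf{W}^1,\dots,\mathbf{W}^K$, identified with vectors in $\mathbb{R}^{Kd}$; $\|\cdot\|$ is a fixed norm on $\mathbb{R}^{Kd}$. Let $\ell:\mathcal{W}\times\mathbb{R}^d\times[K]\to\mathbb{R}_+$ be convex in $\mathbf{W}$ and such that for all $\mathbf{W}\in\mathcal{W}$, $\mathbf{x}\in\mathbb{R}^d$ and all $y\ne y^\star:=\arg\max_k\langle \mathbf{W}^k,\mathbf{x}\rangle$: $\frac{K-1}{K}\ell(\mathbf{W},\mathbf{x},y)+\frac1K\ell(\mathbf{W},\mathbf{x},y^\star)\ge 1$. Then $\ell_t=\ell(\cdot,\mathbf{x}_t,y_t)$ is a regular surrogate loss (with constant $L>0$) if $\|\nabla\ell_t(\mathbf{W})\|^2\le 2L\,\ell_t(\mathbf{W})$ for all $\mathbf{W}\in\mathcal{W}$. Gappletron (inputs: $\mathcal{Q}$, $S$, an online convex optimization algorithm $\mathcal{A}$ on $\mathcal{W}$, $\gamma\ge0$, gap map $a$): $\mathbf{W}_1$ is output by $\mathcal{A}$. At round $t$: $y_t^\star=\arg\max_k\langle\mathbf{W}_t^k,\mathbf{x}_t\rangle$;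 $\gamma_t=0$ if $y_t^\star\in\mathcal{Q}$, else $\gamma_t=\min\{\tfrac12,\gamma/\sqrt{|\{s\le t:y_s^\star\notin\mathcal{Q}\}|}\}$; $a_t=a(\mathbf{W}_t,\mathbf{x}_t)$; $\zeta_t=\mathbb{1}[\gamma_t\le a_t]$; $\mathbf{p}_t'=(1-\zeta_t a_t-(1-\zeta_t)\gamma_t)\mathbf{e}_{y_t^\star}+\zeta_t a_t\frac1K\mathbf{1}+(1-\zeta_t)\frac{\gamma_t}{\rho}\mathbf{1}_S$; predict $y_t'\sim\mathbf{p}_t'$; set $v_t=\mathbb{1}[y_t\in\mathrm{out}(y_t')]/P_t(y_t\in\mathrm{out}(y_t'))$ and $\widehat\ell_t(\mathbf{W})=v_t\ell_t(\mathbf{W})$; feed $\widehat\ell_t$ to $\mathcal{A}$ and receive $\mathbf{W}_{t+1}$. *)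

(* Defs.v *)
From mathcomp Require Import all_boot all_order all_algebra.
Set Implicit Arguments. Unset Strict Implicit. Unset Printing Implicit Defensive.
Import Order.TTheory GRing.Theory Num.Theory.
Local Open Scope ring_scope.

Section Gap.
Variable R : rcfType.
Variables K d : nat.

Definition out (E : rel 'I_K) (y' : 'I_K) : {set 'I_K} := [set y | E y' y].

(* Convention: a node with K-1 outgoing edges gets its missing edge added. *)
Definition out_eff (E : rel 'I_K) (y' : 'I_K) : {set 'I_K} :=
  if #|out E y'| == K.-1 then [set: 'I_K] else out E y'.

Definition feedback_graph (E : rel 'I_K) : Prop :=
  forall y : 'I_K, exists y' : 'I_K, E y' y.

Definition revealing (E : rel 'I_K) : {set 'I_K} :=
  [set y' | out_eff E y' == [set: 'I_K]].

Definition dominating (E : rel 'I_K) (S : {set 'I_K}) : Prop :=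
  forall y : 'I_K, exists2 y', y' \in S & y \in out_eff E y'.

Definition min_dominating (E : rel 'I_K) (S : {set 'I_K}) : Prop :=
  dominating E S /\ forall S', dominating E S' -> (#|S| <= #|S'|)%N.

Definition score (W : 'M[R]_(K, d)) (x : 'rV[R]_d) (k : 'I_K) : R :=
  \sum_(j < d) W k j * x 0 j.

Definition is_argmax_selector (ystar : 'M[R]_(K, d) -> 'rV[R]_d -> 'I_K) : Prop :=
  forall W x k, score W x k <= score W x (ystar W x).

Definition n_nonrev (Q : {set 'I_K}) (ys : nat -> 'I_K) (t : nat) : nat :=
  \sum_(1 <= s < t.+1) (ys s \notin Q).

Definition gamma_t (Q : {set 'I_K}) (gamma : R) (ys : nat -> 'I_K) (t : nat) : R :=
  if ys t \in Q then 0
  else Num.min (2^-1) (gamma / Num.sqrt (n_nonrev Q ys t)%:R).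

Definition p_prime (ystar_t : 'I_K) (S : {set 'I_K}) (gt at_ : R) (y : 'I_K) : R :=
  let zeta : R := ((gt <= at_)%R)%:R in
  (1 - zeta * at_ - (1 - zeta) * gt) * (y == ystar_t)%:R
  + zeta * at_ / K%:R
  + (1 - zeta) * gt / (#|S|)%:R * (y \in S)%:R.

End Gap.

(* Main.v *)
Require Import Defs.
From mathcomp Require Import all_boot all_order all_algebra.
Import Order.TTheory GRing.Theory Num.Theory.
Local Open Scope ring_scope.
From mathcomp Require Import ring lra.

Lemma sum_neq (R : numDomainType) (K : nat) (yt : 'I_K) :
  \sum_(y < K) (y != yt)%:R = (K.-1)%:R :> R.
Proof.
rewrite (bigD1 yt) //= eqxx add0r.
rewrite (eq_bigr (fun _ => 1)); last by move=> i ->.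
by rewrite sumr_const cardC1 card_ord.
Qed.

Lemma sum_eq (R : numDomainType) (K : nat) (ys yt : 'I_K) (c : R) :
  \sum_(y < K) c * (y == ys)%:R * (y != yt)%:R = c * (ys != yt)%:R.
Proof.
rewrite (bigD1 ys) //= eqxx mulr1 big1 ?addr0 // => i /negbTE ->.
by rewrite mulr0 mul0r.
Qed.

Lemma sum_S (R : numDomainType) (K : nat) (S : {set 'I_K}) (yt : 'I_K) :
  \sum_(y < K) (y \in S)%:R * (y != yt)%:R <= (#|S|)%:R :> R.
Proof.
have -> : (#|S|)%:R = \sum_(y < K) (y \in S)%:R :> R.
  rewrite -sum1_card natr_sum big_mkcond /=; apply: eq_bigr => i _; by case: (i \in S).
apply: ler_sum => i _; case: (i \in S); case: (i != yt) => //=; rewrite ?mulr1 ?mulr0 ?mul0r //.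
Qed.
Theorem lemma1 (R : rcfType) (K d : nat)
  (E : rel 'I_K) (S : {set 'I_K})
  (Wset : 'M[R]_(K, d) -> Prop)
  (ell : 'M[R]_(K, d) -> 'rV[R]_d -> 'I_K -> R)
  (ystar : 'M[R]_(K, d) -> 'rV[R]_d -> 'I_K)
  (a : 'M[R]_(K, d) -> 'rV[R]_d -> R)
  (gamma : R)
  (Ws : nat -> 'M[R]_(K, d)) (xs : nat -> 'rV[R]_d) (ys : nat -> 'I_K)
  (t : nat) :
  feedback_graph E ->
  min_dominating E S ->
  (* W convex *)
  (forall W1 W2 (lam : R), Wset W1 -> Wset W2 -> 0 <= lam <= 1 ->
     Wset (lam *: W1 + (1 - lam) *: W2)) ->
  (* ell nonnegative and convex in W *)
  (forall W x y, Wset W -> 0 <= ell W x y) ->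
  (forall W1 W2 x y (lam : R), Wset W1 -> Wset W2 -> 0 <= lam <= 1 ->
     ell (lam *: W1 + (1 - lam) *: W2) x y
       <= lam * ell W1 x y + (1 - lam) * ell W2 x y) ->
  is_argmax_selector ystar ->
  (* defining property of ell *)
  (forall W x y, Wset W -> y != ystar W x ->
     1 <= (K.-1)%:R / K%:R * ell W x y + K%:R^-1 * ell W x (ystar W x)) ->
  0 <= gamma ->
  (forall s, Wset (Ws s)) ->
  (* gap map a : values in [0,1], equal to ell(W_s, x_s, y*_s) *)
  (forall W x, 0 <= a W x <= 1) ->
  (forall s, a (Ws s) (xs s) = ell (Ws s) (xs s) (ystar (Ws s) (xs s))) ->
  (1 <= t)%N ->
  let yst := fun s => ystar (Ws s) (xs s) in
  let gt := gamma_t (revealing E) gamma yst t in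
  \sum_(y < K) p_prime (yst t) S gt (a (Ws t) (xs t)) y * (y != ys t)%:R
    <= (K.-1)%:R / K%:R * ell (Ws t) (xs t) (ys t) + gt.
Proof.
move=> _ _ _ ell0 _ _ Hell gam0 HW Ha Haell _ /=.
set yst := fun s => ystar (Ws s) (xs s).
set gt := gamma_t _ _ _ t.
have K0 : (0 < K)%N by case: (ys 0) => m Hm; apply: leq_ltn_trans Hm.
set A := a (Ws t) (xs t).
have [A0 A1] : 0 <= A /\ A <= 1 by have /andP[] := Ha (Ws t) (xs t).
have g0 : 0 <= gt.
  rewrite /gt /gamma_t; case: ifP => // _.
  by rewrite le_min invr_ge0 ler0n /= divr_ge0 // sqrtr_ge0.
set z : R := ((gt <= A)%R)%:R.
set c := 1 - z * A - (1 - z) * gt.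
have -> : \sum_(y < K) p_prime (yst t) S gt A y * (y != ys t)%:R =
   c * (yst t != ys t)%:R + z * A / K%:R * (K.-1)%:R
   + (1 - z) * gt / (#|S|)%:R * \sum_(y < K) (y \in S)%:R * (y != ys t)%:R.
  rewrite -(@sum_eq _ _ _ _ c) -(@sum_neq _ _ (ys t)) !mulr_sumr -!big_split /=.
  apply: eq_bigr => i _; rewrite /p_prime /c /z /=; ring.
have Hth : (1 - z) * gt / (#|S|)%:R * \sum_(y < K) (y \in S)%:R * (y != ys t)%:R
   <= (1 - z) * gt.
  have z01 : 0 <= 1 - z by rewrite /z; case: (gt <= A); rewrite ?subrr ?subr0.
  have Hg : 0 <= (1 - z) * gt by rewrite mulr_ge0.
  have s0 : 0 <= \sum_(y < K) (y \in S)%:R * (y != ys t)%:R :> R.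
    by apply: sumr_ge0 => i _; rewrite mulr_ge0.
  case: (posnP #|S|) => [->|Sp].
    by rewrite invr0 mulr0 mul0r.
  rewrite -mulrA ler_piMr // ler_pdivrMl ?ltr0n // mulr1; exact: sum_S.
have Kp : (0 : R) < K%:R by rewrite ltr0n.
have HK1 : (K.-1)%:R = K%:R - 1 :> R. by rewrite -(prednK K0) /= -natr1 addrK.
have ellyt := ell0 (Ws t) (xs t) (ys t) (HW t).
have HAe : A = ell (Ws t) (xs t) (yst t) by rewrite /A Haell.
case: (eqVneq (yst t) (ys t)) => [Heq|Hne].
  rewrite mulr0 add0r.
  have : z * A / K%:R * (K.-1)%:R <= (K.-1)%:R / K%:R * ell (Ws t) (xs t) (ys t).
    rewrite -Heq -HAe mulrAC [_ / _ * _]mulrC -mulrA ler_wpM2r //.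
      by rewrite divr_ge0 // ler0n.
    by rewrite /z; case: (gt <= A); rewrite ?mul1r ?mul0r.
  have Hzg : (1 - z) * gt <= gt by rewrite /z; case: (gt <= A); rewrite ?subrr ?mul0r ?subr0 ?mul1r.
  move: Hth Hzg; lra.
rewrite /= mulr1.
have Hne2 : ys t != ystar (Ws t) (xs t) by rewrite eq_sym.
have H1 := Hell (Ws t) (xs t) (ys t) (HW t) Hne2.
have HA' : K%:R^-1 * ell (Ws t) (xs t) (ystar (Ws t) (xs t)) = A / K%:R.
  by rewrite mulrC /A Haell.
rewrite HA' in H1.
have Hu : A / K%:R * (K.-1)%:R = A - A / K%:R.
  by rewrite HK1; field; rewrite lt0r_neq0.
have HAK : A / K%:R <= A.
  by rewrite ler_pdivrMr // ler_peMr // ler1n.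
have Hzg : (1 - z) * gt <= gt by rewrite /z; case: (gt <= A); rewrite ?subrr ?mul0r ?subr0 ?mul1r.
move: Hth Hzg; rewrite /c /z.
have [Hg|Hg] := boolP (gt <= A)%R.
  rewrite /= subrr !mul0r subr0 !mul1r Hu; lra.
rewrite /= !mul0r !subr0 !mul1r; rewrite -ltNge in Hg; lra.
Qed.
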